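(* Let $T=(V,E)$ be an $X$-tree. Then $\mathrm{rk}^T(\mathcal{L})\le|E|-1$ for every bipartite $\mathcal{L}\subseteq\binom{X}{2}$. Moreover, for every bipartite $\mathcal{L}\subseteq\binom{X}{2}$ the following are equivalent: (i) $\mathrm{rk}^T(\mathcal{L})=|E|-1$; (ii) there is a cord $xy\in\binom{X}{2}$ such that $\mathcal{L}\cup\{xy\}$ is an edge-weight lasso for $T$; (iii) $\mathcal{L}$ is connected, and for every cord $xy$, $\mathcal{L}\cup\{xy\}$ is an edge-weight lasso for $T$ if and only if $\mathcal{L}\cup\{xy\}$ is not bipartite; (iv) $\mathcal{L}$ is connected, the closure $[\mathcal{L}]^T$ equals $A\vee B$ where $\{A,B\}$ is the (unique) bipartition of $X$ with $\mathcal{L}\subseteq A\vee B$, and $A\vee B$ is a hyperplane of $\mathbb{M}(T)$.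
   Context: Let $X$ be a finite set with $|X|=n\ge 3$. An $X$-tree is a finite tree $T=(V,E)$ whose set of degree-1 vertices is exactly $X$ and which has no vertices of degree $2$. A cord is a $2$-subset $xy$ of $X$. For each cord $xy$, $\lambda^T_{xy}:\mathbb{R}^E\to\mathbb{R}$, $\omega\mapsto\sum_{e\in E(x|y)}\omega(e)$, where $E(x|y)$ is the edge set of the path from $x$ to $y$. For $\mathcal{L}\subseteq\binom{X}{2}$, $\mathrm{rk}^T(\mathcal{L})$ is the dimension of the span of $\{\lambda^T_{xy}:xy\in\mathcal{L}\}$; $\mathbb{M}(T)$ is the matroid on $\binom{X}{2}$ with rank function $\mathrm{rk}^T$ (its rank is $|E|$). The closure of $\mathcal{L}$ is $[\mathcal{L}]^T=\{xy\in\binom{X}{2}:\mathrm{rk}^T(\mathcal{L}\cup\{xy\})=\mathrm{rk}^T(\mathcal{L})\}$; a hyperplane is a maximal subset of $\binom{X}{2}$ of rank less than $|E|$. An edge-weight lasso for $T$ is a set $\mathcal{L}$ with $\mathrm{rk}^T(\mathcal{L})=|E|$. $\mathcal{L}$ is called connected (resp. bipartite) if the graph $\Gamma(\mathcal{L})=(X,\mathcal{L})$ with vertex set $X$ and edge set $\mathcal{L}$ is connected (resp. bipartite). For disjoint $A,B\subseteq X$, $A\vee B:=\{ab:a\in A,b\in B\}$. *)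

(* Defs.v *)
From HB Require Import structures.
From mathcomp Require Import all_boot all_order all_algebra.
From Stdlib Require Import ClassicalEpsilon.
Set Implicit Arguments. Unset Strict Implicit. Unset Printing Implicit Defensive.
Import Order.TTheory GRing.Theory Num.Theory.

Section XTrees.
Variable V : finType.
Variable adj : rel V.

Definition tedges : {set {set V}} :=
  [set [set p.1; p.2] | p in [set p : V * V | adj p.1 p.2]].

Definition degree (v : V) : nat := #|[set u | adj v u]|.

Definition leaves : {set V} := [set v | degree v == 1].

Definition has_cycle : Prop :=
  exists (x : V) (p : seq V),
    [/\ 3 <= size p, path adj x p, last x p = x & uniq p].

Definition is_X_tree : Prop :=
  [/\ symmetric adj, irreflexive adj,
      (forall u v : V, connect adj u v), ~ has_cycle &
      (forall v : V, degree v != 2)].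

Definition is_path_seq (x y : V) (p : seq V) : bool :=
  [&& path adj x p, last x p == y & uniq (x :: p)].

Definition path_edges (x : V) (p : seq V) : seq {set V} :=
  map (fun q : V * V => [set q.1; q.2]) (zip (x :: p) p).

Definition on_path (x y : V) (e : {set V}) : Prop :=
  exists p : seq V, is_path_seq x y p /\ e \in path_edges x p.

Definition cords : {set {set V}} :=
  [set c : {set V} | (c \subset leaves) && (#|c| == 2)].

Definition on_cord_path (c e : {set V}) : Prop :=
  exists x y : V, [/\ c = [set x; y], x != y & on_path x y e].

Variable R : realFieldType.

(* lambda^T_{xy} as a vector in R^E; we regard R^E as the coordinate
   subspace of R^{set V} of functions supported on E (zero outside E). *)
Definition lam (c : {set V}) : {ffun {set V} -> R^o} :=
  [ffun e => if excluded_middle_informative (e \in tedges /\ on_cord_path c e)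
             then (1%R : R) else 0%R].

Definition rk (L : {set {set V}}) : nat :=
  \dim (<< [seq lam c | c <- enum L] >>%VS).

Definition lasso (L : {set {set V}}) : Prop := rk L = #|tedges|.

Definition Lclosure (L : {set {set V}}) : {set {set V}} :=
  [set c in cords | rk (c |: L) == rk L].

Definition hyperplane (H : {set {set V}}) : Prop :=
  [/\ H \subset cords, rk H < #|tedges| &
      forall H' : {set {set V}}, H' \subset cords -> H \proper H' ->
        #|tedges| <= rk H'].

Definition Lrel (L : {set {set V}}) : rel V := fun u v => [set u; v] \in L.

Definition L_connected (L : {set {set V}}) : Prop :=
  forall x y, x \in leaves -> y \in leaves -> connect (Lrel L) x y.

Definition L_bipartite (L : {set {set V}}) : Prop :=
  exists A : {set V}, forall c, c \in L -> #|c :&: A| = 1.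

Definition vee (A B : {set V}) : {set {set V}} :=
  [set [set a; b] | a in A, b in B].

End XTrees.

(* Main.v *)
Require Import Defs.
From HB Require Import structures.
From mathcomp Require Import all_boot all_order all_algebra.
From mathcomp Require Import zify ring.
From Stdlib Require Import ClassicalEpsilon.
Set Implicit Arguments. Unset Strict Implicit. Unset Printing Implicit Defensive.
Import Order.TTheory GRing.Theory Num.Theory.
Local Open Scope ring_scope.

Section Work.
Variables (V : finType) (adj : rel V) (R : realFieldType).
Hypothesis sym : symmetric adj.
Hypothesis conn : forall u v : V, connect adj u v.
Hypothesis three : (3 <= #|leaves adj|)%N.

Local Notation lv := (leaves adj).

Lemma leaf_nbr z w w' : z \in lv -> adj z w -> adj z w' -> w = w'.
Proof.
rewrite inE /degree => /cards1P [x Hx] a1 a2.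
have : w \in [set u | adj z u] by rewrite inE.
have : w' \in [set u | adj z u] by rewrite inE.
by rewrite Hx !inE => /eqP -> /eqP ->.
Qed.

Definition nb z := odflt z [pick w | adj z w].

Lemma leaf_adj z : z \in lv -> adj z (nb z).
Proof.
rewrite inE /degree => /cards1P [x Hx].
have : x \in [set u | adj z u] by rewrite Hx inE.
rewrite inE /nb => Hzx; case: pickP => [w //|/(_ x)]; by rewrite Hzx.
Qed.

Definition pend z : {set V} := [set z; nb z].

Lemma pend_edge z : z \in lv -> pend z \in tedges adj.
Proof. move=> Hz; apply/imsetP; exists (z, nb z) => //; by rewrite inE /= leaf_adj. Qed.

Lemma three_leaves : exists x y z, [/\ x \in lv, y \in lv, z \in lv & [/\ x != y, x != z & y != z]].
Proof.
have : (0 < #|lv|)%N by apply: leq_trans three.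
move/card_gt0P => [x Hx].
have H3 := three; rewrite (cardsD1 x) Hx in H3.
have : (0 < #|lv :\ x|)%N by lia.
move/card_gt0P => [y]; rewrite in_setD1 => /andP [Hyx Hy].
have : (0 < #|lv :\: [set x; y]|)%N.
  rewrite cardsD ltn_subRL addn0.

  apply: (leq_trans _ three); rewrite ltnS.
  apply: leq_trans (subset_leq_card (subsetIr _ _)) _; by rewrite cards2 ltnS leq_b1.
move/card_gt0P => [z]; rewrite in_setD in_set2 negb_or => /andP [/andP [Hzx Hzy] Hz].
exists x, y, z; split => //; split => //; by rewrite eq_sym.
Qed.

Lemma third_leaf x y : exists z, [/\ z \in lv, z != x & z != y].
Proof.
have : (0 < #|lv :\: [set x; y]|)%N.
  rewrite cardsD ltn_subRL addn0.
  apply: (leq_trans _ three); rewrite ltnS.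
  apply: leq_trans (subset_leq_card (subsetIr _ _)) _; by rewrite cards2 ltnS leq_b1.
move/card_gt0P => [z]; rewrite in_setD in_set2 negb_or => /andP [/andP [Hzx Hzy] Hz].
by exists z.
Qed.

Lemma csym : connect_sym adj.
Proof. exact: sym_connect_sym. Qed.

Lemma pend_inj x y : x \in lv -> y \in lv -> pend x = pend y -> x = y.
Proof.
move=> Hx Hy Hp; apply/eqP/negPn/negP => Hxy.
have Hxny : x = nb y.
  have : x \in pend y by rewrite -Hp !inE eqxx.
  by rewrite !inE (negbTE Hxy) /= => /eqP.
have Hynx : y = nb x.
  have : y \in pend x by rewrite Hp !inE eqxx.
  by rewrite !inE eq_sym (negbTE Hxy) /= => /eqP.
have [z [Hz Hzx Hzy]] := third_leaf x y.
have Hcl : closed adj (mem [set x; y]).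
  apply: (intro_closed csym) => u v Huv; rewrite !inE => /orP [] /eqP Hu; subst u.
    by rewrite (leaf_nbr Hx Huv (leaf_adj Hx)) -Hynx eqxx orbT.
  by rewrite (leaf_nbr Hy Huv (leaf_adj Hy)) -Hxny eqxx.
have := closed_connect Hcl (conn x z).
by rewrite !inE eqxx /= (negbTE Hzx) (negbTE Hzy).
Qed.

Lemma mem_zip1 (s t : seq V) q : q \in zip s t -> (q.1 \in s) && (q.2 \in t).
Proof.
elim: s t => [|a s IH] [|b t] //=; rewrite inE => /orP [/eqP ->|/IH /andP [H1 H2]].
  by rewrite !inE !eqxx.
by rewrite !inE H1 H2 !orbT.
Qed.

Lemma on_path_pend u v z : z \in lv -> on_path adj u v (pend z) -> (z == u) || (z == v).
Proof.
move=> Hz [p [/and3P [Hpath /eqP Hlast Huniq] Hin]].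
move: Hin; rewrite /path_edges => /mapP [q Hq Hpq].
have Hzq : z \in [set q.1; q.2] by rewrite -Hpq !inE eqxx.
have Hzup : z \in u :: p.
  move: (mem_zip1 Hq) => /andP [H1 H2]; move: Hzq; rewrite !inE => /orP [] /eqP ->.
    by rewrite inE in H1.
  by rewrite H2 orbT.
move: Hzup; rewrite inE => /orP [-> //|Hzp].
case/splitPr: Hzp Hpath Hlast Huniq => p1 p2 Hpath Hlast Huniq.
case: p2 Hpath Hlast Huniq => [|b p2] Hpath Hlast Huniq.
  by rewrite last_cat /= in Hlast; rewrite Hlast eqxx orbT.
exfalso.
rewrite cat_path /= in Hpath; case/and4P: Hpath => _ Ha Hb _.
have Hab : last u p1 != b.
  rewrite -cat_cons cat_uniq in Huniq; case/and3P: Huniq => _ Hn _.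
  apply/negP => /eqP Heq; move/hasPn: Hn => /(_ b).
  rewrite !inE eqxx orbT /= -Heq -in_cons mem_last. by move=> /(_ isT).
rewrite sym in Ha.
by move: Hab; rewrite (leaf_nbr Hz Ha Hb) eqxx.
Qed.

Lemma on_path_pend_head u v : u \in lv -> u != v -> on_path adj u v (pend u).
Proof.
move=> Hu Huv; have /connectP [p Hp Hl] := conn u v.
case: (shortenP Hp) Hl => p' Hp' Hu' _ Hl.
case: p' Hp' Hu' Hl => [|w p'] Hp' Hu' Hl.
  by rewrite /= in Hl; rewrite Hl eqxx in Huv.
exists (w :: p'); split; first by rewrite /is_path_seq Hp' Hu' -Hl eqxx.
case/andP: Hp' => Huw _.
by rewrite /path_edges /= (leaf_nbr Hu Huw (leaf_adj Hu)) inE eqxx.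
Qed.

Lemma cordP c : c \in cords adj ->
  exists x y, [/\ x \in lv, y \in lv, x != y & c = [set x; y]].
Proof.
rewrite inE => /andP [Hcl /cards2P [x [y [Hxy Hcxy]]]].
exists x, y; split => //; apply: (subsetP Hcl); by rewrite Hcxy !inE eqxx ?orbT.
Qed.

Lemma cord2 x y : x \in lv -> y \in lv -> x != y -> [set x; y] \in cords adj.
Proof.
move=> Hx Hy Hxy; rewrite inE cards2 Hxy /= andbT.
by apply/subsetP => w; rewrite in_set2 => /orP [] /eqP ->.
Qed.

Lemma lam_pend c z : c \in cords adj -> z \in lv -> lam adj R c (pend z) = (z \in c)%:R.
Proof.
move=> Hc Hz; rewrite /lam ffunE.
have [x [y [Hx Hy Hxy Hcxy]]] := cordP Hc.
destruct (excluded_middle_informative _) as [H | Hn]; rewrite /=.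
  case: H => _ [x' [y' [Hc' Hxy' Hp]]].
  by have := on_path_pend Hz Hp => /orP [] /eqP ->; rewrite Hc' !inE eqxx ?orbT.
case Hzc: (z \in c) => //; exfalso; apply: Hn; split; first exact: pend_edge.
move: Hzc; rewrite Hcxy !inE => /orP [] /eqP ->.
  by exists x, y; split => //; exact: on_path_pend_head.
exists y, x; split; [by rewrite setUC | by rewrite eq_sym |].
by apply: on_path_pend_head => //; rewrite eq_sym.
Qed.

Local Notation U := {ffun {set V} -> R^o}.
Local Notation lam := (lam adj R).
Local Notation rk := (rk adj R).
Local Notation E := (tedges adj).

Definition ind (e : {set V}) : U := [ffun e' => (e' == e)%:R].
Definition Wsp : {vspace U} := <<[seq ind e | e <- enum E]>>%VS.
Definition Sp (L : {set {set V}}) : {vspace U} := <<[seq lam c | c <- enum L]>>%VS.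
Lemma rkE L : rk L = \dim (Sp L). Proof. by []. Qed.

Lemma dimW : (\dim Wsp <= #|E|)%N.
Proof. by apply: leq_trans (dim_span _) _; rewrite size_map cardE. Qed.

Lemma indE e e' : ind e e' = (e' == e)%:R.
Proof. by rewrite ffunE. Qed.

Lemma scaleffE (a : R) (f : U) x : (a *: f) x = a * f x.
Proof. by rewrite ffunE. Qed.

Lemma lam_out c e : e \notin E -> lam c e = 0.
Proof.
move=> He; rewrite /lam ffunE; destruct (excluded_middle_informative _) as [H|H] => //=; case: H => H _.
by rewrite (negbTE He) in H.
Qed.

Lemma lam_W c : lam c \in Wsp.
Proof.
have -> : lam c = \sum_(e in E) lam c e *: ind e.
  apply/ffunP => e'; rewrite sum_ffunE.
  under eq_bigr do rewrite scaleffE indE.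
  case He': (e' \in E).
    rewrite (bigD1 e') //= eqxx mulr1 big1 ?addr0 // => e /andP [_ Hne].
    by rewrite eq_sym (negbTE Hne) mulr0.
  rewrite big1; last first.
    move=> e He; case: eqP => [Heq|]; last by rewrite mulr0.
    by move: He; rewrite -Heq He'.
  by rewrite lam_out // He'.
apply: memv_suml => e He; apply: memvZ; apply: memv_span; apply: map_f; by rewrite mem_enum.
Qed.

Lemma Sp_W L : (Sp L <= Wsp)%VS.
Proof. by apply/span_subvP => v /mapP [c _ ->]; exact: lam_W. Qed.

Lemma rk_le L : (rk L <= #|E|)%N.
Proof. by rewrite rkE; apply: leq_trans (dimvS (Sp_W L)) dimW. Qed.

Lemma Sp_mono (L L' : {set {set V}}) : L \subset L' -> (Sp L <= Sp L')%VS.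
Proof.
move=> HL; apply: sub_span => v /mapP [c Hc ->]; apply: map_f.
by rewrite mem_enum (subsetP HL) // -mem_enum.
Qed.

Lemma rk_mono (L L' : {set {set V}}) : L \subset L' -> (rk L <= rk L')%N.
Proof. by move=> HL; rewrite !rkE; apply: dimvS; apply: Sp_mono. Qed.

Lemma Sp_U1 c L : Sp (c |: L) = (<[lam c]> + Sp L)%VS.
Proof.
rewrite /Sp -span_cons; apply: eq_span => v.
rewrite inE; apply/mapP/idP => [[d]|].
  rewrite mem_enum in_setU1 => /orP [/eqP -> ->|Hd ->]; first by rewrite eqxx.
  by rewrite map_f ?orbT // mem_enum.
case/orP => [/eqP ->|/mapP [d Hd ->]]; first by exists c; rewrite // mem_enum setU11.
by exists d => //; rewrite mem_enum setU1r // -mem_enum.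
Qed.

Lemma rk_U1 c L : (rk (c |: L) <= (rk L).+1)%N.
Proof.
rewrite !rkE Sp_U1; apply: leq_trans (dimv_add_leqif _ _) _.
by rewrite dim_vline -add1n leq_add2r leq_b1.
Qed.

Lemma notin_lt (S : {vspace U}) f : f \notin S -> (\dim S < \dim (<[f]> + S))%N.
Proof.
move=> Hf; rewrite (ltn_leqif (dimv_leqif_sup (addvSr _ _))) subv_add subvv andbT.
exact: Hf.
Qed.

Lemma rk_U1_gt c L : lam c \notin Sp L -> (rk L < rk (c |: L))%N.
Proof. by move=> H; rewrite !rkE Sp_U1; apply: notin_lt. Qed.

Definition psi (g : V -> R) (f : U) : R^o := \sum_(z in lv) g z * f (pend z).

Lemma psi_linear g : linear (psi g).
Proof.
move=> a u v; rewrite /psi scaler_sumr -big_split /=; apply: eq_bigr => z _.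
by rewrite ffunE ffunE mulrDr mulrCA.
Qed.

Definition psiL g : {linear U -> R^o} :=
  HB.pack (psi g) (GRing.isLinear.Build _ _ _ _ (psi g) (psi_linear g)).

Lemma psi_vanish g (L : {set {set V}}) : (forall c, c \in L -> psi g (lam c) = 0) ->
  forall v, v \in Sp L -> psi g v = 0.
Proof.
move=> H v Hv.
have : (Sp L <= lker (linfun (psiL g)))%VS.
  by apply/span_subvP => w /mapP [c Hc ->]; rewrite memv_ker lfunE /= H // -mem_enum.
by move/subvP/(_ v Hv); rewrite memv_ker lfunE /= => /eqP.
Qed.

Lemma psi_lam g c : c \in cords adj -> psi g (lam c) = \sum_(z in c) g z.
Proof.
move=> Hc; have [x [y [Hx Hy Hxy Hcxy]]] := cordP Hc.
rewrite /psi; under eq_bigr => z Hz do rewrite lam_pend //.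
rewrite Hcxy big_setU1 ?inE // big_set1.
rewrite (bigD1 x) //= set21 mulr1 (bigD1 y) /=; last by rewrite Hy eq_sym Hxy.
rewrite set22 mulr1 big1 ?addr0 // => z /andP [/andP [_ Hzx] Hzy].
by rewrite in_set2 (negbTE Hzx) (negbTE Hzy) mulr0.
Qed.

Lemma psi_ind g z : z \in lv -> psi g (ind (pend z)) = g z.
Proof.
move=> Hz; rewrite /psi (bigD1 z) //= indE eqxx mulr1 big1 ?addr0 // => w /andP [Hw Hwz].
rewrite indE; case: eqP => [/pend_inj|]; last by rewrite mulr0.
by move=> /(_ Hw Hz) Heq; rewrite Heq eqxx in Hwz.
Qed.

Lemma card2I x y (A : {set V}) : x != y ->
  (#|[set x; y] :&: A| == 1%N) = ((x \in A) != (y \in A)).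
Proof.
move=> Hxy.
have H1 w : w \in A -> [set w] :&: A = [set w].
  by move=> Hw; apply/setP => u; rewrite !inE; case: eqP => // ->; rewrite Hw.
have H0 w : w \notin A -> [set w] :&: A = set0.
  by move=> Hw; apply/setP => u; rewrite !inE; case: eqP => // ->; rewrite (negbTE Hw).
rewrite setIUl; case Hx: (x \in A); case Hy: (y \in A).
- by rewrite !H1 // cards2 Hxy.
- by rewrite H1 // H0 ?Hy // setU0 cards1.
- by rewrite H0 ?Hx // H1 // set0U cards1.
- by rewrite !H0 ?Hx ?Hy // setU0 cards0.
Qed.

Lemma ind_W z : z \in lv -> ind (pend z) \in Wsp.
Proof. by move=> Hz; apply: memv_span; apply: map_f; rewrite mem_enum pend_edge. Qed.

Lemma ind_notin g (L : {set {set V}}) z : (forall c, c \in L -> psi g (lam c) = 0) ->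
  z \in lv -> g z != 0 -> ind (pend z) \notin Sp L.
Proof.
move=> H Hz Hg; apply/negP => /(psi_vanish H); rewrite psi_ind // => /eqP.
by rewrite (negbTE Hg).
Qed.

Lemma K1 g (L : {set {set V}}) z : (forall c, c \in L -> psi g (lam c) = 0) ->
  z \in lv -> g z != 0 -> (rk L < #|E|)%N.
Proof.
move=> H Hz Hg.
rewrite rkE; apply: leq_trans (notin_lt (ind_notin H Hz Hg)) _.
apply: leq_trans _ dimW; apply: dimvS; by rewrite subv_add Sp_W andbT -memvE ind_W.
Qed.

Lemma K2 g1 g2 (L : {set {set V}}) z1 z2 :
  (forall c, c \in L -> psi g1 (lam c) = 0) ->
  (forall c, c \in L -> psi g2 (lam c) = 0) ->
  z1 \in lv -> z2 \in lv -> g1 z1 != 0 -> g2 z1 = 0 -> g2 z2 != 0 ->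
  ((rk L).+2 <= #|E|)%N.
Proof.
move=> H1 H2 Hz1 Hz2 Hg1 Hg21 Hg2.
set S' := (<[ind (pend z1)]> + Sp L)%VS.
have HS' : forall v, v \in S' -> psi g2 v = 0.
  move=> v /memv_addP [a /vlineP [k ->] [b Hb ->]].
  have := psi_linear g2 k (ind (pend z1)) b => /= ->.
  by rewrite psi_ind // Hg21 (psi_vanish H2 Hb) scaler0 addr0.
have Hf2 : ind (pend z2) \notin S'.
  by apply/negP => /HS'; rewrite psi_ind // => /eqP; rewrite (negbTE Hg2).
rewrite rkE; have h1 := notin_lt (ind_notin H1 Hz1 Hg1).
have h2 := notin_lt Hf2.
have h3 : (\dim (<[ind (pend z2)]> + S') <= #|E|)%N.
  apply: leq_trans _ dimW; apply: dimvS.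
  by rewrite !subv_add Sp_W andbT -!memvE !ind_W.
rewrite -/S' in h1; apply: (leq_ltn_trans h1); exact: (leq_trans h2 h3).
Qed.

Definition sgn (A : {set V}) z : R := if z \in A then 1 else -1.

Lemma sgn_neq0 A z : sgn A z != 0.
Proof. by rewrite /sgn; case: ifP => _; rewrite ?oppr_eq0 oner_eq0. Qed.

Lemma sum_sgn A x y : x != y -> \sum_(z in [set x; y]) sgn A z =
  if (x \in A) != (y \in A) then 0 else 2 * sgn A x.
Proof.
move=> Hxy; rewrite big_setU1 ?inE // big_set1 /sgn.
by case: (x \in A); case: (y \in A) => /=; ring.
Qed.

Lemma sum2 (f : V -> R) x y : x != y -> \sum_(z in [set x; y]) f z = f x + f y.
Proof. by move=> Hxy; rewrite big_setU1 ?inE // big_set1. Qed.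

Lemma sgn_opp (A : {set V}) u w : (u \in A) != (w \in A) -> sgn A u + sgn A w = 0.
Proof. by rewrite /sgn; case: (u \in A); case: (w \in A) => //= _; ring. Qed.

Definition bipA (L : {set {set V}}) (A : {set V}) := forall c, c \in L -> #|c :&: A| = 1%N.

Lemma bip_psi (A : {set V}) (L : {set {set V}}) : L \subset cords adj -> bipA L A ->
  forall c, c \in L -> psi (sgn A) (lam c) = 0.
Proof.
move=> HL HA c Hc; have Hcc := subsetP HL c Hc.
have [x [y [Hx Hy Hxy Hcxy]]] := cordP Hcc.
rewrite psi_lam // Hcxy sum2 // sgn_opp // -card2I // -Hcxy HA //.
Qed.

Lemma some_leaf : exists z, z \in lv.
Proof. by have [x [y [z [Hx _ _ _]]]] := three_leaves; exists x. Qed.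

Lemma bip_lt (L : {set {set V}}) : L \subset cords adj -> L_bipartite L -> (rk L < #|E|)%N.
Proof.
move=> HL [A HA]; have [z Hz] := some_leaf.
exact: (K1 (bip_psi HL HA) Hz (sgn_neq0 A z)).
Qed.

Lemma E_pos : (0 < #|E|)%N.
Proof. by have [z Hz] := some_leaf; apply/card_gt0P; exists (pend z); apply: pend_edge. Qed.

Lemma same_side_gt (A : {set V}) (L : {set {set V}}) x y : L \subset cords adj -> bipA L A ->
  x \in lv -> y \in lv -> x != y -> (x \in A) = (y \in A) ->
  (rk L < rk ([set x; y] |: L))%N.
Proof.
move=> HL HA Hx Hy Hxy Hs; apply: rk_U1_gt; apply/negP => /(psi_vanish (bip_psi HL HA)).
rewrite psi_lam ?cord2 // sum_sgn // Hs eqxx /=.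
apply/eqP; rewrite mulf_neq0 ?sgn_neq0 //.
by rewrite pnatr_eq0.
Qed.

Lemma Lrel_sym (L : {set {set V}}) : connect_sym (Lrel L).
Proof. by apply: sym_connect_sym => u w; rewrite /Lrel setUC. Qed.

Lemma Lrel_cord (L : {set {set V}}) u w : L \subset cords adj -> Lrel L u w ->
  [/\ u \in lv, w \in lv & u != w].
Proof.
move=> HL Huw; have := subsetP HL _ Huw; rewrite inE => /andP [Hs].
rewrite cards2 eqSS eqb1 => Hne; split => //; apply: (subsetP Hs); by rewrite !inE eqxx ?orbT.
Qed.

Lemma disconn (A : {set V}) (L : {set {set V}}) x y : L \subset cords adj -> bipA L A ->
  x \in lv -> y \in lv -> ~~ connect (Lrel L) x y -> ((rk L).+2 <= #|E|)%N.
Proof.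
move=> HL HA Hx Hy Hn.
pose g1 z := if connect (Lrel L) x z then sgn A z else 0.
pose g2 z := if connect (Lrel L) x z then 0 else sgn A z.
have Hcl := connect_closed (Lrel_sym L) x.
have Hv : forall (g : V -> R), (forall u w, connect (Lrel L) x u -> g u + g w = 0 \/ True) -> True by [].
have Hgen : forall b : bool, forall c, c \in L ->
    psi (fun z => if connect (Lrel L) x z == b then sgn A z else 0) (lam c) = 0.
  move=> b c Hc; have Hcc := subsetP HL c Hc.
  have [u [w [Hu Hw Huw Hcuw]]] := cordP Hcc.
  have Hr : Lrel L u w by rewrite /Lrel -Hcuw.
  have Heq := Hcl u w Hr.
  rewrite psi_lam // Hcuw sum2 //.
  move: Heq; rewrite !inE => ->.
  case: (connect (Lrel L) x w == b); last by rewrite addr0.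
  by rewrite sgn_opp // -card2I // -Hcuw HA.
apply: (K2 (Hgen true) (Hgen false) Hx Hy).
- by rewrite connect0 /= sgn_neq0.
- by rewrite connect0.
- by rewrite (negbTE Hn) /= sgn_neq0.
Qed.

Lemma notbip (A : {set V}) (L : {set {set V}}) x y : L_connected adj L -> L \subset cords adj -> bipA L A ->
  x \in lv -> y \in lv -> x != y -> (x \in A) = (y \in A) -> ~ L_bipartite ([set x; y] |: L).
Proof.
move=> Hc HL HA Hx Hy Hxy Hs [A' HA'].
pose t := [pred z | (z \in A) == (z \in A')].
have Hcl : closed (Lrel L) t.
  move=> u w Hr; have [Hu Hw Huw] := Lrel_cord HL Hr.
  have h1 : (u \in A) != (w \in A) by rewrite -card2I // HA.
  have h2 : (u \in A') != (w \in A') by rewrite -card2I // HA' // setU1r.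
  move: h1 h2; rewrite !inE.
  by case: (u \in A); case: (w \in A); case: (u \in A'); case: (w \in A').
have := closed_connect Hcl (Hc x y Hx Hy).
have h2 : (x \in A') != (y \in A') by rewrite -card2I // HA' // setU11.
move: h2 Hs; rewrite !inE.
by case: (x \in A); case: (y \in A); case: (x \in A'); case: (y \in A').
Qed.

Lemma pigeon (P : pred V) : exists x y, [/\ x \in lv, y \in lv, x != y & P x = P y].
Proof.
have [a [b [c [Ha Hb Hc [Hab Hac Hbc]]]]] := three_leaves.
case Eab: (P a == P b); first by exists a, b; split => //; apply/eqP.
case Eac: (P a == P c); first by exists a, c; split => //; apply/eqP.
exists b, c; split => //; move: Eab Eac.
by case: (P a); case: (P b); case: (P c).
Qed.

Lemma inB (A B : {set V}) y : A :|: B = lv -> y \in lv -> y \notin A -> y \in B.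
Proof. by move=> HU Hy Hya; move: Hy; rewrite -HU in_setU (negbTE Hya). Qed.

Lemma vee_mem (A B : {set V}) c : A :|: B = lv -> A :&: B = set0 ->
  (c \in vee A B) = (c \in cords adj) && (#|c :&: A| == 1%N).
Proof.
move=> HU HI; apply/idP/idP.
  case/imset2P => a b Ha Hb ->.
  have HnA : b \notin A.
    apply/negP => HbA; have : b \in A :&: B by rewrite in_setI HbA.
    by rewrite HI inE.
  have Hab : a != b by apply/negP => /eqP Hab; rewrite -Hab Ha in HnA.
  have Hal : a \in lv by rewrite -HU in_setU Ha.
  have Hbl : b \in lv by rewrite -HU in_setU Hb orbT.
  by rewrite cord2 //= card2I // Ha (negbTE HnA).
case/andP => Hc H1; have [x [y [Hx Hy Hxy Hcxy]]] := cordP Hc.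
rewrite Hcxy card2I // in H1; rewrite Hcxy.
case Hxa: (x \in A); rewrite Hxa in H1.
  have Hyb : y \in B by apply: (inB HU Hy); move: H1; case: (y \in A).
  by apply/imset2P; exists x y.
  have Hxb : x \in B by apply: (inB HU Hx); rewrite Hxa.
rewrite setUC; apply/imset2P; exists y x => //.
by move: H1; case: (y \in A).
Qed.

Lemma closure_rk (L H : {set {set V}}) : (forall c, c \in H -> rk (c |: L) = rk L) ->
  (rk H <= rk L)%N.
Proof.
move=> HH; rewrite !rkE; apply: dimvS; apply/span_subvP => v /mapP [c Hc ->].
apply/negPn/negP => Hn; have := rk_U1_gt Hn.
have HcH : c \in H by rewrite -mem_enum.
by rewrite HH // ltnn.
Qed.

Lemma subU1 (c : {set V}) (L H : {set {set V}}) : c \in H -> L \subset H -> c |: L \subset H.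
Proof. by move=> Hc HL; rewrite subUset sub1set Hc HL. Qed.

Lemma a1 (a b n : nat) : a = (n - 1)%N -> (a < b)%N -> (b <= n)%N -> b = n.
Proof. lia. Qed.
Lemma a2 (a b n : nat) : b = n -> (b <= a.+1)%N -> (a < n)%N -> a = (n - 1)%N.
Proof. lia. Qed.
Lemma a3 (a b n : nat) : a = (n - 1)%N -> (b < n)%N -> (a <= b)%N -> b = a.
Proof. lia. Qed.
Lemma a4 (a b c n : nat) : a = (n - 1)%N -> (a < b)%N -> (b <= c)%N -> (n <= c)%N.
Proof. lia. Qed.
Lemma a5 (a b c n : nat) : (n <= b)%N -> (b <= c.+1)%N -> (c <= a)%N -> (a < n)%N -> a = (n - 1)%N.
Proof. lia. Qed.
Lemma a6 (a n : nat) : (a < n)%N -> (a <= n - 1)%N.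
Proof. lia. Qed.
Lemma a7 (a n : nat) : (n - 1 <= a)%N -> (a.+2 <= n)%N -> False.
Proof. lia. Qed.

Lemma main_sec (L : {set {set V}}) : L \subset cords adj -> L_bipartite L ->
  let E := tedges adj in
  let rkL := rk in
  (rkL L <= #|E| - 1)%N /\
  [/\ (rkL L = (#|E| - 1)%N <->
       exists c, c \in cords adj /\ lasso adj R (c |: L)),
      ((exists c, c \in cords adj /\ lasso adj R (c |: L)) <->
       (L_connected adj L /\
        forall c, c \in cords adj ->
          (lasso adj R (c |: L) <-> ~ L_bipartite (c |: L)))) &
      ((L_connected adj L /\
        forall c, c \in cords adj ->
          (lasso adj R (c |: L) <-> ~ L_bipartite (c |: L))) <->
       (L_connected adj L /\
        exists A B : {set V},
          [/\ [/\ A :|: B = leaves adj, A :&: B = set0, A != set0 & B != set0],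
              L \subset vee A B,
              Lclosure adj R L = vee A B &
              hyperplane adj R (vee A B)]))].
Proof.
move=> HL HB /=.
have HE := E_pos.
have Hlt := bip_lt HL HB.
have Hconn : (#|E| - 1 <= rk L)%N -> L_connected adj L.
  move=> Hge x y Hx Hy; apply/negPn/negP => Hn.
  have [A HA] := HB; exact: (a7 Hge (disconn HL HA Hx Hy Hn)).
have i_ii : rk L = (#|E| - 1)%N -> exists c, c \in cords adj /\ lasso adj R (c |: L).
  move=> Hr; have [A HA] := HB.
  have [x [y [Hx Hy Hxy Hs]]] := pigeon (fun z => z \in A).
  exists [set x; y]; split; first exact: cord2.
  exact: (a1 Hr (same_side_gt HL HA Hx Hy Hxy Hs) (rk_le ([set x; y] |: L))).
have ii_i : (exists c, c \in cords adj /\ lasso adj R (c |: L)) -> rk L = (#|E| - 1)%N.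
  move=> [c [Hc Hl]]; exact: (a2 Hl (rk_U1 c L) Hlt).
have ii_iii : (exists c, c \in cords adj /\ lasso adj R (c |: L)) ->
       (L_connected adj L /\
        forall c, c \in cords adj ->
          (lasso adj R (c |: L) <-> ~ L_bipartite (c |: L))).
  move=> H; have Hr := ii_i H; split; first by apply: Hconn; rewrite Hr.
  move=> c Hc; split.
    move=> Hl Hb; have := bip_lt (subU1 Hc HL) Hb; by rewrite Hl ltnn.
  move=> Hnb; have [A HA] := HB; have [x [y [Hx Hy Hxy Hcxy]]] := cordP Hc.
  case Hs: ((x \in A) == (y \in A)).
    rewrite Hcxy; exact: (a1 Hr (same_side_gt HL HA Hx Hy Hxy (eqP Hs)) (rk_le _)).
  exfalso; apply: Hnb; exists A => d; rewrite in_setU1 => /orP [/eqP ->|]; last exact: HA.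
  by apply/eqP; rewrite Hcxy card2I // Hs.
have iii_ii : (L_connected adj L /\
        forall c, c \in cords adj ->
          (lasso adj R (c |: L) <-> ~ L_bipartite (c |: L))) ->
     exists c, c \in cords adj /\ lasso adj R (c |: L).
  move=> [Hc Hiff]; have [A HA] := HB.
  have [x [y [Hx Hy Hxy Hs]]] := pigeon (fun z => z \in A).
  exists [set x; y]; split; first exact: cord2.
  by apply/(Hiff _ (cord2 Hx Hy Hxy)); exact: notbip Hc HL HA Hx Hy Hxy Hs.
split; first exact: a6.
split; [by split | by split | split].
  move=> Hiii; have Hr := ii_i (iii_ii Hiii); case: Hiii => Hc Hiff; split => //.
  have [A0 HA0] := HB.
  have HU : (lv :&: A0) :|: (lv :\: A0) = lv by rewrite setID.
  have HI : (lv :&: A0) :&: (lv :\: A0) = set0.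
    by apply/setP => z; rewrite !inE; case: (z \in A0); rewrite ?andbF ?andbT ?andNb.
  have HcA : forall c, c \in cords adj -> #|c :&: (lv :&: A0)| = #|c :&: A0|.
    move=> c; rewrite inE => /andP [Hs _]; by rewrite setIA (setIidPl Hs).
  have HLv : L \subset vee (lv :&: A0) (lv :\: A0).
    apply/subsetP => c Hc'; have Hcc := subsetP HL c Hc'.
    by rewrite vee_mem // Hcc HcA // HA0.
  exists (lv :&: A0), (lv :\: A0); split => //.
  - split => //.
    + have [x [y [Hx Hy Hxy _]]] := pigeon predT.
      have /connectP [p Hp Hl] := Hc x y Hx Hy.
      case: p Hp Hl => [|w p] Hp Hl; first by rewrite /= in Hl; rewrite Hl eqxx in Hxy.
      case/andP: Hp => Hxw _.
      have [Hx' Hw' Hxw'] := Lrel_cord HL Hxw.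
      have := HA0 _ Hxw; move/eqP; rewrite card2I // => Hd.
      apply/set0Pn; move: Hd; case Hxa: (x \in A0); case Hwa: (w \in A0) => // _.
        by exists x; rewrite in_setI Hx' Hxa.
      by exists w; rewrite in_setI Hw' Hwa.
    + have [x [y [Hx Hy Hxy _]]] := pigeon predT.
      have /connectP [p Hp Hl] := Hc x y Hx Hy.
      case: p Hp Hl => [|w p] Hp Hl; first by rewrite /= in Hl; rewrite Hl eqxx in Hxy.
      case/andP: Hp => Hxw _.
      have [Hx' Hw' Hxw'] := Lrel_cord HL Hxw.
      have := HA0 _ Hxw; move/eqP; rewrite card2I // => Hd.
      apply/set0Pn; move: Hd; case Hxa: (x \in A0); case Hwa: (w \in A0) => // _.
        by exists w; rewrite in_setD Hw' Hwa.
      by exists x; rewrite in_setD Hx' Hxa.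
  - apply/setP => c; rewrite /Lclosure inE vee_mem //.
    case Hcc: (c \in cords adj) => //=; rewrite HcA //.
    case H1: (#|c :&: A0| == 1%N).
      apply/eqP; have Hb : L_bipartite (c |: L).
        by exists A0 => d; rewrite in_setU1 => /orP [/eqP ->|]; [apply/eqP | exact: HA0].
      exact: (a3 Hr (bip_lt (subU1 Hcc HL) Hb) (rk_mono (subsetUr [set c] L))).
    have [x [y [Hx Hy Hxy Hcxy]]] := cordP Hcc.
    rewrite Hcxy card2I // in H1.
    apply/negbTE/eqP => Heq.
    have := same_side_gt HL HA0 Hx Hy Hxy (eqP (negbFE H1)).
    by rewrite -Hcxy Heq ltnn.
  - split.
    + by apply/subsetP => c; rewrite vee_mem // => /andP [].
    + apply: bip_lt; first by apply/subsetP => c; rewrite vee_mem // => /andP [].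
      by exists (lv :&: A0) => c; rewrite vee_mem // => /andP [_ /eqP].
    + move=> H' HH' /properP [Hsub [c Hc' Hnc]].
      have Hcc := subsetP HH' c Hc'.
      move: Hnc; rewrite vee_mem // Hcc /= HcA //.
      have [x [y [Hx Hy Hxy Hcxy]]] := cordP Hcc.
      rewrite Hcxy card2I // => H1.
      have h1 := same_side_gt HL HA0 Hx Hy Hxy (eqP (negbNE H1)).
      have h2 := rk_mono (subU1 Hc' (subset_trans HLv Hsub)).
      rewrite -Hcxy in h1; exact: (a4 Hr h1 h2).
move=> [Hc [A [B [[HU HI _ _] HLs Hclo [Hsub Hrk Hmax]]]]].
apply: ii_iii; apply: i_ii.
have [x [y [Hx Hy Hxy Hs]]] := pigeon (fun z => z \in A).
have Hnv : [set x; y] \notin vee A B by rewrite vee_mem // card2I // Hs eqxx andbF.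
have Hpr : vee A B \proper [set x; y] |: vee A B.
  by apply/properP; split; [apply: subsetUr | exists [set x; y]; rewrite ?setU11].
have Hge := Hmax _ (subU1 (cord2 Hx Hy Hxy) Hsub) Hpr.
have Hcl : (rk (vee A B) <= rk L)%N.
  apply: closure_rk => c Hc'; move: Hc'; rewrite -Hclo inE => /andP [_ /eqP].
  done.
exact: (a5 Hge (rk_U1 _ _) Hcl Hlt).
Qed.

End Work.

Local Close Scope ring_scope.

Theorem mainTheorem9 (V : finType) (adj : rel V) (R : realFieldType) :
  is_X_tree adj -> 3 <= #|leaves adj| ->
  forall L : {set {set V}}, L \subset cords adj -> L_bipartite L ->
  let E := tedges adj in
  let rkL := rk adj R in
  rkL L <= #|E| - 1 /\
  [/\ (rkL L = #|E| - 1 <->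
       exists c, c \in cords adj /\ lasso adj R (c |: L)),
      ((exists c, c \in cords adj /\ lasso adj R (c |: L)) <->
       (L_connected adj L /\
        forall c, c \in cords adj ->
          (lasso adj R (c |: L) <-> ~ L_bipartite (c |: L)))) &
      ((L_connected adj L /\
        forall c, c \in cords adj ->
          (lasso adj R (c |: L) <-> ~ L_bipartite (c |: L))) <->
       (L_connected adj L /\
        exists A B : {set V},
          [/\ [/\ A :|: B = leaves adj, A :&: B = set0, A != set0 & B != set0],
              L \subset vee A B,
              Lclosure adj R L = vee A B &
              hyperplane adj R (vee A B)]))].
Proof.
Proof.
move=> [Hsym _ Hconn _ _] H3 L HL HB.
apply: main_sec => //.
Qed.
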